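(* Let $q$ be a prime power, $n\ge1$, and $d,m$ positive integers. There exists an equidistant linear code $\mathcal{U}\subseteq\mathbb{P}_q(n)$ with constant distance $2d$ and $|\mathcal{U}|=2^m$ if and only if there exists a $d$-intersecting family $\mathcal{F}\subseteq\mathbb{G}_q(n,2d)$ with $|\mathcal{F}|=2^m-1$.
   Context: $\mathbb{P}_q(n)$ denotes the set of all subspaces of $\mathbb{F}_q^n$ and $\mathbb{G}_q(n,k)$ the set of $k$-dimensional subspaces. For subspaces $X,Y$ the subspace distance is $d_S(X,Y)=\dim X+\dim Y-2\dim(X\cap Y)$. A linear code in $\mathbb{P}_q(n)$ is a subset $\mathcal{U}\subseteq\mathbb{P}_q(n)$ with $\{0\}\in\mathcal{U}$ for which there exists a map $\boxplus:\mathcal{U}\times\mathcal{U}\to\mathcal{U}$ such that (i) $(\mathcal{U},\boxplus)$ is an abelian group; (ii) its identity element is $\{0\}$; (iii) $X\boxplus X=\{0\}$ for all $X\in\mathcal{U}$; (iv) $d_S(Y_1\boxplus X,Y_2\boxplus X)=d_S(Y_1,Y_2)$ for all $Y_1,Y_2,X\in\mathcal{U}$. It is equidistant with constant distance $r$ if $d_S(X,Y)=r$ for all distinct $X,Y\in\mathcal{U}$. A family $\mathcal{F}$ of subspaces is $\lambda$-intersecting if $\dim(X\cap Y)=\lambda$ for all distinct $X,Y\in\mathcal{F}$. *)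

(* Defs.v *)
From mathcomp Require Import all_boot all_algebra.
Set Implicit Arguments. Unset Strict Implicit. Unset Printing Implicit Defensive.
Import GRing.Theory.
Local Open Scope ring_scope.

(* The ambient space F_q^n is 'rV[F]_n for a finite field F (|F| = q);
   subspaces are {vspace 'rV[F]_n}.  A finite family of subspaces is
   represented by a duplicate-free sequence. *)

Notation subsp F n := {vspace 'rV[F]_n}.

Definition dS (F : fieldType) (n : nat) (X Y : subsp F n) : nat :=
  (\dim X + \dim Y - 2 * \dim (X :&: Y))%N.

Definition linear_code (F : fieldType) (n : nat) (U : seq (subsp F n)) : Prop :=
  (0%VS \in U) /\
  exists bp : subsp F n -> subsp F n -> subsp F n,
    {in U &, forall X Y, bp X Y \in U} /\
    (forall X Y Z, X \in U -> Y \in U -> Z \in U -> bp X (bp Y Z) = bp (bp X Y) Z) /\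
    {in U &, forall X Y, bp X Y = bp Y X} /\
    {in U, forall X, bp 0%VS X = X /\ bp X 0%VS = X} /\
    {in U, forall X, exists2 Y, Y \in U & bp X Y = 0%VS} /\
    {in U, forall X, bp X X = 0%VS} /\
    (forall Y1 Y2 X, Y1 \in U -> Y2 \in U -> X \in U ->
          dS (bp Y1 X) (bp Y2 X) = dS Y1 Y2).

Definition equidistant (F : fieldType) (n : nat) (U : seq (subsp F n)) (r : nat) : Prop :=
  {in U &, forall X Y, X != Y -> dS X Y = r}.

Definition lambda_intersecting (F : fieldType) (n : nat) (Fm : seq (subsp F n)) (l : nat) : Prop :=
  {in Fm &, forall X Y, X != Y -> \dim (X :&: Y) = l}.

(* Main.v *)
From Stdlib Require Import Arith Lia.
Require Import Defs.
From mathcomp Require Import all_boot all_algebra.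
From mathcomp Require Import zify.

Lemma expn_pow (m : nat) : (2 ^ m)%N = Nat.pow 2 m.
Proof. elim: m => // m IH; rewrite expnS IH /=; lia. Qed.

Lemma lxor_bound (m a b : nat) : (0 < m)%coq_nat -> (a < Nat.pow 2 m)%coq_nat -> (b < Nat.pow 2 m)%coq_nat ->
  (Nat.lxor a b < Nat.pow 2 m)%coq_nat.
Proof.
  move=> Hm Ha Hb.
  have key : forall x, (x < Nat.pow 2 m)%coq_nat -> (Nat.log2 x < m)%coq_nat.
    move=> x Hx; case: x Hx => [|x] Hx; first by rewrite /=.
    by apply/Nat.log2_lt_pow2 => //; lia.
  case E: (Nat.lxor a b) => [|k]; first by have := @Nat.pow_nonzero 2 m; lia.
  apply/Nat.log2_lt_pow2; first lia.
  rewrite -E; have := Nat.log2_lxor a b; have := key _ Ha; have := key _ Hb; lia.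
Qed.

Lemma lxor_injr (a b c : nat) : Nat.lxor a c = Nat.lxor b c -> a = b.
Proof.
  move=> H; have := f_equal (fun x => Nat.lxor x c) H.
  by rewrite !Nat.lxor_assoc Nat.lxor_nilpotent !Nat.lxor_0_r.
Qed.

Lemma dSX0 (F : fieldType) n (X : subsp F n) : dS X 0%VS = \dim X.
Proof. by rewrite /dS capv0 dimv0 muln0 addn0 subn0. Qed.

Lemma dS0X (F : fieldType) n (X : subsp F n) : dS 0%VS X = \dim X.
Proof. by rewrite /dS cap0v dimv0 muln0 add0n subn0. Qed.

Lemma dSXX (F : fieldType) n (X : subsp F n) : dS X X = 0%N.
Proof. by rewrite /dS capvv; apply/eqP; rewrite subn_eq0 mul2n -addnn. Qed.

Theorem theorem10 (F : finFieldType) (n d m : nat) :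
  (1 <= n)%N -> (0 < d)%N -> (0 < m)%N ->
  (exists U : seq {vspace 'rV[F]_n},
      [/\ uniq U, linear_code U, equidistant U (2 * d) & size U = 2 ^ m])
  <->
  (exists Fm : seq {vspace 'rV[F]_n},
      [/\ uniq Fm, all (fun X => \dim X == 2 * d)%N Fm,
          lambda_intersecting Fm d & size Fm = (2 ^ m).-1]).
Proof.
  move=> Hn Hd Hm; split.
  - case=> U [uU [U0 _] eqU sU].
    exists (rem 0%VS U); split.
    + exact: rem_uniq.
    + apply/allP => X; rewrite (mem_rem_uniq _ uU) inE => /andP [Xn0 XU].
      by rewrite -dSX0 (eqU X 0%VS XU U0 Xn0).
    + move=> X Y; rewrite !(mem_rem_uniq _ uU) !inE => /andP [Xn0 XU] /andP [Yn0 YU] XY.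
      have h1 := eqU X 0%VS XU U0 Xn0; have h2 := eqU Y 0%VS YU U0 Yn0.
      have h3 := eqU X Y XU YU XY.
      rewrite dSX0 in h1; rewrite dSX0 in h2.
      move: h3; rewrite /dS h1 h2.
      have : (\dim (X :&: Y) <= \dim X)%N by apply: dimvS; apply: capvSl.
      rewrite h1 => hle.
      move: (\dim (X :&: Y)) hle => k hle; move/eqP; rewrite -(eqn_add2r (2 * k)).
      rewrite subnK; last by lia.
      lia.
    + by rewrite size_rem // sU.
  - case=> Fm [uF dF iF sF].
    have F0 : (0%VS : subsp F n) \notin Fm.
      apply/negP => /(allP dF); rewrite dimv0 => /eqP; lia.
    have dimF : forall X, X \in Fm -> \dim X = (2 * d)%N by move=> X /(allP dF) /eqP.
    set s := (0%VS : subsp F n) :: Fm.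
    have us : uniq s by rewrite /= F0 uF.
    have ss : size s = (2 ^ m)%N.
      rewrite /= sF prednK //; rewrite expn_gt0 //.
    have eqs : equidistant s (2 * d).
      move=> X Y; rewrite !inE => /orP [/eqP -> | XF] /orP [/eqP -> | YF]; rewrite ?eqxx //.
      + by move=> _; rewrite dS0X dimF.
      + by move=> _; rewrite dSX0 dimF.
      + move=> XY; rewrite /dS (iF X Y XF YF XY) !dimF //; lia.
    exists s; split => //.
    have idx_lt : forall X, X \in s -> (index X s < 2 ^ m)%N by move=> X; rewrite -ss index_mem.
    have xlt : forall X Y, X \in s -> Y \in s ->
        (Nat.lxor (index X s) (index Y s) < size s)%N.
      move=> X Y XS YS; rewrite ss expn_pow; apply/ltP; apply: lxor_bound; rewrite -?expn_pow; apply/ltP => //.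
      exact: idx_lt. exact: idx_lt.
    set bp := fun X Y => nth 0%VS s (Nat.lxor (index X s) (index Y s)).
    have bpin : {in s &, forall X Y, bp X Y \in s} by move=> X Y XS YS; apply: mem_nth; apply: xlt.
    have ibp : forall X Y, X \in s -> Y \in s ->
        index (bp X Y) s = Nat.lxor (index X s) (index Y s).
      by move=> X Y XS YS; rewrite /bp index_uniq //; apply: xlt.
    have s0 : (0%VS : subsp F n) \in s by rewrite inE eqxx.
    have i0 : index (0%VS : subsp F n) s = 0%N by rewrite /= eqxx.
    split => //; exists bp; split => //; split.
      move=> X Y Z XS YS ZS; rewrite {1}/bp ibp // [in RHS]/bp ibp //.
      by rewrite Nat.lxor_assoc.
    split. by move=> X Y XS YS; rewrite /bp Nat.lxor_comm.
    split. by move=> X XS; rewrite /bp i0 Nat.lxor_0_l Nat.lxor_0_r nth_index.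
    have bpXX : {in s, forall X, bp X X = 0%VS} by move=> X XS; rewrite /bp Nat.lxor_nilpotent.
    split. by move=> X XS; exists X => //; apply: bpXX.
    split => //.
    move=> Y1 Y2 X Y1S Y2S XS.
    case: (eqVneq Y1 Y2) => [-> | Yne]; first by rewrite !dSXX.
    have bne : bp Y1 X != bp Y2 X.
      apply/eqP => E; move: (f_equal (fun Z => index Z s) E); rewrite !ibp // => /lxor_injr E2.
      by move/eqP: Yne; apply; rewrite -(nth_index 0%VS Y1S) E2 nth_index.
    by rewrite (eqs _ _ (bpin _ _ Y1S XS) (bpin _ _ Y2S XS) bne) (eqs _ _ Y1S Y2S Yne).
Qed.
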